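(* Fix $m\ge2$, $0<\epsilon<1/64$ and $B=\lfloor m/2\rfloor$. Suppose that for some integer $k\ge1$ there is a panel decision function $\widetilde x:\mathcal L^k\to\mathcal X_B$ such that for every participatory budgeting instance $\langle m,B,(\mathrm{Cost}_1,\dots,\mathrm{Cost}_n)\rangle$ (with $n\ge k$), $$\mathbb E_{S\sim\mathcal U_{k,n}}\big[\textsc{Social-Cost}(\widetilde x(S))\big]\le\textsc{Social-Opt}+\epsilon .$$ Then $k\ge c\, m/\epsilon^2$ for an absolute constant $c>0$ (i.e., $k=\Omega(m\cdot(1/\epsilon)^2)$).
   Context: A participatory budgeting instance $\langle m,B,(\mathrm{Cost}_1,\dots,\mathrm{Cost}_n)\rangle$: $m$ projects, budget $B>0$, and for each agent $i\in[n]$ a cost function $\mathrm{Cost}_i:[0,1]^m\to[0,1]$ that is monotone (non-increasing when the allocation increases coordinatewise) and $1$-Lipschitz w.r.t. $\|\cdot\|_1$. $\mathcal L$ denotes the set of all such $1$-Lipschitz functions $[0,1]^m\to[0,1]$, and $\mathcal X_B=\{x\in[0,1]^m:\sum_jx_j\le B\}$. For a panel $S$ of size $k$, $\widetilde x(S)$ denotes $\widetilde x$ applied to $(\mathrm{Cost}_i)_{i\in S}$. $\textsc{Social-Cost}(x)=\frac1n\sum_i\mathrm{Cost}_i(x)$ and $\textsc{Social-Opt}=\min_{x\in\mathcal X_B}\textsc{Social-Cost}(x)$. $\mathcal U_{k,n}$ is the uniform distribution over size-$k$ subsets of $[n]$. *)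

(* Defs.v *)
(* with MathComp-Analysis; the scalar field is Stdlib's
   concrete real numbers R (a realType via Rstruct), so that the constant c
   in the theorem is a genuine absolute constant. *)
From HB Require Import structures.
From mathcomp Require Import all_boot all_order all_algebra.
From mathcomp Require Import all_classical all_reals.
From mathcomp Require Import Rstruct.
Set Implicit Arguments. Unset Strict Implicit. Unset Printing Implicit Defensive.
Import Order.TTheory GRing.Theory Num.Theory.
Local Open Scope ring_scope.
Local Open Scope classical_set_scope.

Notation R := Rdefinitions.R.

Definition alloc (m : nat) := 'I_m -> R.
Definition cost (m : nat) := alloc m -> R.

Definition in_cube (m : nat) (x : alloc m) : Prop := forall j, 0 <= x j <= 1.

Definition dist1 (m : nat) (x y : alloc m) : R := \sum_(j < m) `|x j - y j|.

Definition in_L (m : nat) (f : cost m) : Prop :=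
  (forall x, in_cube x -> 0 <= f x <= 1) /\
  (forall x y, in_cube x -> in_cube y -> `|f x - f y| <= dist1 x y).

Definition monotone_cost (m : nat) (f : cost m) : Prop :=
  forall x y, in_cube x -> in_cube y -> (forall j, x j <= y j) -> f y <= f x.

Definition X_B (m : nat) (B : R) : set (alloc m) :=
  [set x | in_cube x /\ \sum_(j < m) x j <= B].

Definition social_cost (m n : nat) (Cost : 'I_n -> cost m) (x : alloc m) : R :=
  (\sum_(i < n) Cost i x) / n%:R.

Definition social_opt (m n : nat) (B : R) (Cost : 'I_n -> cost m) : R :=
  inf [set social_cost Cost x | x in @X_B m B].

(* a panel decision function maps the panel's cost functions (L^k) into X_B;
   it is given as a function on sequences, only its values on sequences of
   length k matter. *)
Definition panel_function_valid (m k : nat) (B : R) (xt : seq (cost m) -> alloc m) : Prop :=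
  forall fs : seq (cost m), size fs = k -> (forall f, List.In f fs -> in_L f) ->
    @X_B m B (xt fs).

Definition panel_outcome (m n : nat) (Cost : 'I_n -> cost m)
    (xt : seq (cost m) -> alloc m) (S : {set 'I_n}) : alloc m :=
  xt [seq Cost i | i <- enum S].

Definition expected_panel_cost (m n k : nat) (Cost : 'I_n -> cost m)
    (xt : seq (cost m) -> alloc m) : R :=
  (\sum_(S : {set 'I_n} | #|S| == k) social_cost Cost (panel_outcome Cost xt S))
  / #|[set S : {set 'I_n} | #|S| == k]|%:R.

Definition panel_guarantee (m k : nat) (B eps : R) (xt : seq (cost m) -> alloc m) : Prop :=
  forall (n : nat) (Cost : 'I_n -> cost m), (k <= n)%N ->
    (forall i, monotone_cost (Cost i) /\ in_L (Cost i)) ->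
    expected_panel_cost k Cost xt <= social_opt B Cost + eps.

(* Main.v *)
Require Import Defs.
From mathcomp Require Import all_boot all_order all_algebra.
From mathcomp Require Import all_classical all_reals.
From mathcomp Require Import Rstruct.
From mathcomp Require Import zify ring lra.
Set Implicit Arguments. Unset Strict Implicit. Unset Printing Implicit Defensive.
Import Order.TTheory GRing.Theory Num.Theory.
Local Open Scope ring_scope.


Lemma sum_ind (I : finType) (j : I) (F : I -> R) :
  \sum_i ((j == i)%:R * F i) = F j.
Proof.
rewrite (bigD1 j) //= eqxx mul1r big1 ?addr0 // => x /negbTE.
by rewrite eq_sym => ->; rewrite mul0r.
Qed.

Lemma sumW (I T : finType) (D : T -> R) : \sum_t D t = 1 ->
  \sum_(w : {ffun I -> T}) \prod_a D (w a) = 1.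
Proof.
move=> hD; rewrite -(bigA_distr_bigA (fun _ t => D t)) /=.
by rewrite big1 // => a _; rewrite hD.
Qed.

Lemma prod_ind (I : finType) (b : I -> bool) :
  \prod_a ((b a)%:R : R) = ([forall a, b a])%:R.
Proof.
case: (boolP [forall a, b a]) => [/forallP H|/forallPn [a Ha]].
  by rewrite big1 // => a _; rewrite H.
by rewrite (bigD1 a) //= (negbTE Ha) mul0r.
Qed.

Section Marg.
Variables (T : finType) (D : T -> R) (hD : \sum_t D t = 1).
Variables (n k : nat) (e : seq 'I_n) (i : 'I_n).
Hypotheses (ue : uniq e) (se : size e = k) (ie : i \notin e).

Definition useq (u : {ffun 'I_k -> T}) := map u (enum 'I_k).

Lemma size_useq u : size (useq u) = k.
Proof. by rewrite size_map size_enum_ord. Qed.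

Definition cnd (u : {ffun 'I_k -> T}) (t : T) (a : 'I_n) (x : T) : bool :=
  if a \in e then x == nth t (useq u) (index a e)
  else if a == i then x == t else true.

Lemma ind_eq w u t : ((map w e == useq u) && (w i == t)) = [forall a, cnd u t a (w a)].
Proof.
apply/andP/forallP.
- case=> /eqP hm /eqP hi a; rewrite /cnd; case: ifP => ae.
    by rewrite -hm (nth_map i) ?index_mem // nth_index.
  by case: ifP => // /eqP ->; rewrite hi.
- move=> H; split; last by have := H i; rewrite /cnd (negbTE ie) eqxx.
  apply/eqP/(@eq_from_nth _ t); first by rewrite size_map size_useq.
  move=> p; rewrite size_map => hp; rewrite (nth_map i) //.
  by have := H (nth i e p); rewrite /cnd mem_nth // index_uniq // => /eqP.
Qed.

Lemma useq_eq w u : (map w e == useq u) =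
   ([ffun p : 'I_k => nth (w i) (map w e) p] == u).
Proof.
apply/eqP/eqP => [hm|<-].
  apply/ffunP => p; rewrite ffunE hm /useq (nth_map p) ?size_enum_ord //.
  by rewrite nth_ord_enum.
apply/(@eq_from_nth _ (w i)); first by rewrite size_map size_map size_enum_ord se.
move=> p; rewrite size_map se => hp.
by rewrite (nth_map (Ordinal hp)) ?size_enum_ord // ffunE nth_enum_ord.
Qed.

Lemma marg (G : seq T -> T -> R) :
  \sum_(w : {ffun 'I_n -> T}) (\prod_a D (w a)) * G (map w e) (w i) =
  \sum_(u : {ffun 'I_k -> T}) (\prod_p D (u p)) * \sum_t D t * G (useq u) t.
Proof.
have stepa : forall w : {ffun 'I_n -> T}, G (map w e) (w i) =
   \sum_u \sum_t (((map w e == useq u) && (w i == t))%:R * G (useq u) t).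
  move=> w.
  transitivity (\sum_u ((map w e == useq u)%:R * \sum_t ((w i == t)%:R * G (useq u) t))).
    under eq_bigr do rewrite sum_ind.
    under eq_bigr do rewrite useq_eq.
    rewrite sum_ind; congr G; apply/eqP; rewrite useq_eq; exact/eqP.
  apply: eq_bigr => u _; rewrite mulr_sumr; apply: eq_bigr => t _.
  by rewrite -mulnb natrM mulrA.
under eq_bigr do rewrite stepa mulr_sumr.
rewrite exchange_big /=; apply: eq_bigr => u _.
under eq_bigr do rewrite mulr_sumr.
rewrite exchange_big /= mulr_sumr; apply: eq_bigr => t _.
under eq_bigr do rewrite mulrA.
rewrite -mulr_suml [RHS]mulrA; congr (_ * _).
transitivity (\sum_(w : {ffun 'I_n -> T}) \prod_a (D (w a) * (cnd u t a (w a))%:R)).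
  apply: eq_bigr => w _; rewrite big_split /= prod_ind; congr (_ * _%:R).
  by rewrite ind_eq.
rewrite -(bigA_distr_bigA (fun a x => D x * (cnd u t a x)%:R)) /=.
transitivity (\prod_a (if a \in e then D (nth t (useq u) (index a e))
                      else if a == i then D t else 1)).
  apply: eq_bigr => a _; rewrite /cnd; case: ifP => ae.
    under eq_bigr do rewrite eq_sym; by rewrite -[RHS]sum_ind; apply: eq_bigr => x _; rewrite mulrC.
  case: ifP => ai.
    under eq_bigr do rewrite eq_sym; by rewrite -[RHS]sum_ind; apply: eq_bigr => x _; rewrite mulrC.
  by under eq_bigr do rewrite mulr1.
rewrite (bigID (fun a => a \in e)) /=; congr (_ * _); last first.
  rewrite (bigD1 i) //= (negbTE ie) eqxx big1 ?mulr1 //.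
  by move=> a /andP [/negbTE -> /negbTE ->].
rewrite -big_uniq //.
rewrite (eq_big_seq (fun a => D (nth t (useq u) (index a e)))); last by move=> a ->.
rewrite (big_nth i) se big_mkord; apply: eq_bigr => p _.
rewrite index_uniq ?se // /useq (nth_map p) ?size_enum_ord //.
by rewrite nth_ord_enum.
Qed.
End Marg.


Section Model.
Variables (m d : nat) (hdm : (d + d <= m)%N) (hd : (0 < d)%N).
Variable (dl : R) (hdl0 : 0 < dl) (hdl1 : dl <= 1/4).

Ltac dlra := have ? := hdl0; have ? := hdl1; lra.

Definition Ty := ('I_d * bool)%type.

Lemma jlt (t : Ty) : (t.1 + (t.2 : nat) * d < m)%N.
Proof using hdm. clear -hdm t. have := ltn_ord t.1; case: t.2 => /=; lia. Qed.

Definition jmap (t : Ty) : 'I_m := Ordinal (jlt t).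

Lemma jmap_inj : injective jmap.
Proof using. clear -hdm.
move=> [r s] [r' s'] /(congr1 val) /=.
have := ltn_ord r; have := ltn_ord r'.
case: s; case: s' => /= h1 h2 h; try lia; congr pair; apply: val_inj => /=; lia.
Qed.

Lemma dpos : 0 < (d%:R : R). Proof. by rewrite ltr0n. Qed.

Definition Dt (th : {ffun 'I_d -> bool}) (t : Ty) : R :=
  (1/2 + (if t.2 == th t.1 then dl else - dl)) / d%:R.

Lemma Dt_ge th t : 1 / (4 * d%:R) <= Dt th t.
Proof.
have hd' := dpos. rewrite /Dt.
have h : 1/4 <= 1/2 + (if t.2 == th t.1 then dl else - dl).
  case: ifP => _; dlra.
rewrite invfM mulrA ler_pM2r ?invr_gt0 //; dlra.
Qed.

Lemma Dt_gt0 th t : 0 < Dt th t.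
Proof. apply: lt_le_trans (Dt_ge th t); by rewrite divr_gt0 // ?mulr_gt0 // ?dpos. Qed.

Lemma sum_pair (F : Ty -> R) : \sum_t F t = \sum_(r < d) (F (r, true) + F (r, false)).
Proof. transitivity (\sum_(p : Ty) F (p.1, p.2)); first by apply: eq_bigr => -[]. rewrite -(pair_bigA _ (fun r s => F (r, s))) /=; apply: eq_bigr => r _; by rewrite big_bool. Qed.

Lemma Dt_sum th : \sum_t Dt th t = 1.
Proof.
rewrite sum_pair.
have hd' := dpos.
transitivity (\sum_(r < d) (1 / d%:R : R)).
  apply: eq_bigr => r _; rewrite /Dt /=; case: (th r) => /=; field; dlra.
rewrite sumr_const card_ord -[_ *+ d]mulr_natr; field; exact: lt0r_neq0.
Qed.

Definition xstar (th : {ffun 'I_d -> bool}) : alloc m := fun j =>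
  if [exists t, (jmap t == j) && (t.2 == th t.1)] then 1 else 0.

Lemma xstar_j th t : xstar th (jmap t) = (t.2 == th t.1)%:R.
Proof.
rewrite /xstar; case: existsP => [[t' /andP [/eqP /jmap_inj -> ->]] //|H].
case: eqP => // ht; case: H; exists t; by rewrite eqxx ht eqxx.
Qed.

Lemma sum_jmap (x : alloc m) : (forall j, 0 <= x j) ->
  \sum_t x (jmap t) <= \sum_j x j.
Proof.
move=> hx.
rewrite (eq_bigl (fun t => t \in finset.setT)); last by move=> t; rewrite finset.in_setT.
rewrite -(big_imset _ (in2W jmap_inj)) /=.
rewrite [X in _ <= X](bigID (mem (jmap @: finset.setT))) /=.
by rewrite lerDl sumr_ge0.
Qed.

Lemma xstar_XB th : X_B d%:R (xstar th).
Proof.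
split.
  by move=> j; rewrite /xstar; case: ifP => _; lra.
apply: (@le_trans _ _ (\sum_j \sum_t ((jmap t == j) && (t.2 == th t.1))%:R)).
  apply: ler_sum => j _; rewrite /xstar; case: existsP => [[t ht]|_].
    by rewrite (bigD1 t) //= ht lerDl sumr_ge0.
  by rewrite sumr_ge0.
rewrite exchange_big /=.
apply: (@le_trans _ _ (\sum_(t : Ty) ((t.2 == th t.1)%:R : R))).
  apply: ler_sum => t _; rewrite (bigD1 (jmap t)) //= eqxx /= big1 ?addr0 //.
  by move=> j /negbTE; rewrite eq_sym => ->.
rewrite sum_pair; apply: (@le_trans _ _ (\sum_(r < d) (1 : R))).
  by apply: ler_sum => r _; case: (th r) => /=; rewrite ?addr0 ?add0r.
by rewrite sumr_const card_ord.
Qed.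

Definition fc (t : Ty) : cost m := fun x => 1 - x (jmap t).

Lemma fc_ok t : monotone_cost (fc t) /\ in_L (fc t).
Proof.
split.
  move=> x y _ _ h; rewrite /fc; have := h (jmap t); lra.
split.
  move=> x hx; have := hx (jmap t); rewrite /fc; lra.
move=> x y _ _; rewrite /fc /dist1 (bigD1 (jmap t)) //=.
have -> : 1 - x (jmap t) - (1 - y (jmap t)) = - (x (jmap t) - y (jmap t)) by ring.
by rewrite normrN lerDl sumr_ge0.
Qed.

Definition gl th t (x : alloc m) := xstar th (jmap t) - x (jmap t).
Definition ell th (x : alloc m) := \sum_t Dt th t * gl th t x.
Definition zr (r : 'I_d) (x : alloc m) := x (jmap (r, true)) - x (jmap (r, false)).
Definition sgn (b : bool) : R := if b then 1 else -1.

Lemma ell_lb (th : {ffun 'I_d -> bool}) x : X_B d%:R x ->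
  dl / d%:R * \sum_r (1 - sgn (th r) * zr r x) <= ell th x.
Proof.
move=> [hc hs].
have hd' := dpos.
rewrite -subr_ge0 /ell sum_pair mulr_sumr -sumrB.
have -> : \sum_(r < d) (Dt th (r, true) * gl th (r, true) x + Dt th (r, false) * gl th (r, false) x -
     dl / d%:R * (1 - sgn (th r) * zr r x)) =
   \sum_(r < d) ((1 - (x (jmap (r, true)) + x (jmap (r,false)))) / (2 * d%:R)).
  apply: eq_bigr => r _; rewrite /gl !xstar_j /Dt /zr /sgn /=.
  by case: (th r) => /=; field; rewrite lt0r_neq0.
rewrite -(big_distrl (R:=R)) /= divr_ge0 ?mulr_ge0 //.
rewrite sumrB subr_ge0 sumr_const card_ord.
rewrite -(sum_pair (fun t => x (jmap t))); apply: le_trans (sum_jmap _) _.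
  by move=> j; case/andP: (hc j).
exact: hs.
Qed.

End Model.


Lemma powb (x : R) (k : nat) : 0 <= x -> 2 * k%:R * x <= 1 ->
  (1 + x) ^+ k <= 1 + 2 * k%:R * x.
Proof.
move=> hx; elim: k => [|k IH] hk; first by rewrite expr0 mulr0 mul0r addr0.
have hk' : 2 * k%:R * x <= 1.
  apply: le_trans hk; rewrite ler_wpM2r // ler_wpM2l // ler_nat; lia.
rewrite exprS.
apply: (@le_trans _ _ ((1 + x) * (1 + 2 * k%:R * x))).
  by rewrite ler_wpM2l ?IH //; lra.
rewrite -natr1 in hk *.
have h0 : 0 <= k%:R * x by rewrite mulr_ge0.
nra.
Qed.

Lemma pt_lb (P Q w : R) : 0 < P -> -1 <= w <= 1 ->
  3 * Q - Q ^+ 2 / P - P / 4 <= P * (1 - w) + Q * (1 + w).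
Proof.
move=> hP /andP [hw1 hw2].
rewrite -subr_ge0.
have -> : P * (1 - w) + Q * (1 + w) - (3 * Q - Q ^+ 2 / P - P / 4) =
   ((P - Q - w * P / 2) ^+ 2 + P ^+ 2 * (1 - w ^+ 2) / 4) / P.
  field; exact: lt0r_neq0.
apply: divr_ge0; last exact: ltW.
apply: addr_ge0; first exact: sqr_ge0.
apply: divr_ge0; last lra.
apply: mulr_ge0; first exact: sqr_ge0.
nra.
Qed.

Section Assouad.
Variables (m d : nat) (hdm : (d + d <= m)%N) (hd : (0 < d)%N).
Variable (dl : R) (hdl0 : 0 < dl) (hdl1 : dl <= 1/4).
Variables (k : nat) (X : {ffun 'I_k -> Ty d} -> alloc m).
Hypothesis hX : forall u, X_B d%:R (X u).
Hypothesis hk : k%:R * dl ^+ 2 * 256 <= d%:R.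

Ltac dlra2 := have ? := hdl0; have ? := hdl1; lra.

Local Notation D := (Dt dl).
Local Notation jm := (jmap hdm).

Definition Pu th (u : {ffun 'I_k -> Ty d}) := \prod_p D th (u p).

Lemma Pu_gt0 th u : 0 < Pu th u.
Proof. by apply: prodr_gt0 => p _; apply: Dt_gt0. Qed.

Lemma Pu_sum th : \sum_u Pu th u = 1.
Proof. by apply: sumW; apply: Dt_sum. Qed.

Definition flip (r : 'I_d) (th : {ffun 'I_d -> bool}) : {ffun 'I_d -> bool} :=
  [ffun r' => if r' == r then ~~ th r' else th r'].

Lemma flipK r : involutive (flip r).
Proof.
move=> th; apply/ffunP => r'; rewrite !ffunE.
by case: (r' == r) => //=; rewrite negbK.
Qed.

Lemma chi1 th r : \sum_t D (flip r th) t ^+ 2 / D th t <= 1 + 32 * dl ^+ 2 / d%:R.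
Proof.
have hd' := dpos hd.
have E : forall t, D (flip r th) t ^+ 2 / D th t =
   (D (flip r th) t - D th t) ^+ 2 / D th t + 2 * D (flip r th) t - D th t.
  move=> t; have := Dt_gt0 hd hdl0 hdl1 th t => h; field; exact: lt0r_neq0.
under eq_bigr do rewrite E.
rewrite sumrB big_split /= -mulr_sumr !Dt_sum // mulr1.
have -> : 1 + 32 * dl ^+ 2 / d%:R = 32 * dl ^+ 2 / d%:R + 2 - 1 by ring.
rewrite !lerD2r.
apply: (@le_trans _ _ (\sum_t ((t.1 == r)%:R * (16 * dl ^+ 2 / d%:R)))).
  apply: ler_sum => -[r' s] _ /=; rewrite /Dt /= ffunE.
  case: (eqVneq r' r) => [->|hne]; last first.
    by rewrite subrr expr0n /= !mul0r.
  rewrite /= mul1r ler_pdivrMr; last by have := Dt_gt0 hd hdl0 hdl1 th (r,s); rewrite /Dt mul1r.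
  apply: (@le_trans _ _ (16 * dl ^+ 2 / d%:R * (1 / (4 * d%:R)))); last first.
    rewrite (mul1r (16 * dl ^+ 2 / d%:R)) ler_wpM2l //; last first.
      by have := Dt_ge hd hdl0 hdl1 th (r,s); rewrite /Dt !mul1r.
    by rewrite divr_ge0 ?mulr_ge0 ?sqr_ge0 // ltW.
  rewrite le_eqVlt; apply/orP; left; apply/eqP.
  case: (th r); case: s => /=; field; exact: lt0r_neq0.
rewrite sum_pair /= (bigD1 r) //= eqxx big1 ?addr0; last first.
  by move=> r' /negbTE ->; rewrite mul0r addr0.
rewrite mul1r -mulrDl; lra.
Qed.

Lemma chik th r : \sum_u Pu (flip r th) u ^+ 2 / Pu th u =
  (\sum_t D (flip r th) t ^+ 2 / D th t) ^+ k.
Proof.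
rewrite /Pu.
under eq_bigr do rewrite -prodrXl -prodf_div.
rewrite -(bigA_distr_bigA (fun _ t => D (flip r th) t ^+ 2 / D th t)) /=.
by rewrite prodr_const card_ord.
Qed.

Lemma chi_tot th r : \sum_u Pu (flip r th) u ^+ 2 / Pu th u <= 5/4.
Proof.
have hd' := dpos hd.
rewrite chik.
set c := 32 * dl ^+ 2 / d%:R.
have hc0 : 0 <= c by rewrite /c divr_ge0 ?mulr_ge0 ?sqr_ge0 // ltW.
have hkc : 2 * k%:R * c <= 1/4.
  have -> : 2 * k%:R * c = (k%:R * dl ^+ 2 * 256) / d%:R / 4.
    rewrite /c; field; exact: lt0r_neq0.
  rewrite ler_pdivrMr; last lra.
  rewrite ler_pdivrMr //; have := hk; lra.
apply: (@le_trans _ _ ((1 + c) ^+ k)).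
  apply: lerXn2r; rewrite ?nnegrE.
  - apply: sumr_ge0 => t _; apply: divr_ge0; first exact: sqr_ge0.
    exact/ltW/(Dt_gt0 hd hdl0 hdl1).
  - lra.
  - exact: chi1.
apply: le_trans (powb hc0 _) _; lra.
Qed.

Lemma zr_bnd r (x : alloc m) : X_B d%:R x -> -1 <= zr hdm r x <= 1.
Proof.
case=> hc _; rewrite /zr.
case/andP: (hc (jmap hdm (r, true))) => h1 h2.
case/andP: (hc (jmap hdm (r, false))) => h3 h4.
apply/andP; split; lra.
Qed.

Definition Ar r th := \sum_u Pu th u * (1 - sgn (th r) * zr hdm r (X u)).

Lemma pair_lb th r : 3/2 <= Ar r th + Ar r (flip r th).
Proof.
rewrite /Ar -big_split /=.
have hf : flip r th r = ~~ th r by rewrite ffunE eqxx.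
apply: (@le_trans _ _ (\sum_u (3 * Pu (flip r th) u - Pu (flip r th) u ^+ 2 / Pu th u
   - Pu th u / 4))).
  rewrite !sumrB -mulr_sumr -mulr_suml !Pu_sum.
  have := chi_tot th r; lra.
apply: ler_sum => u _.
have hw : -1 <= sgn (th r) * zr hdm r (X u) <= 1.
  case/andP: (zr_bnd r (hX u)) => h1 h2.
  rewrite /sgn; case: (th r); apply/andP; split; lra.
have := pt_lb (Pu (flip r th) u) (Pu_gt0 th u) hw.
rewrite hf /sgn; case: (th r) => /=; lra.
Qed.

Lemma Ar_sum r : 3/4 * \sum_(th : {ffun 'I_d -> bool}) 1 <= \sum_th Ar r th.
Proof.
have E : \sum_th Ar r th = \sum_th Ar r (flip r th).
  exact: (reindex_inj (can_inj (flipK r))).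
have : \sum_(th : {ffun 'I_d -> bool}) (3/2 : R) <= \sum_th (Ar r th + Ar r (flip r th)).
  by apply: ler_sum => th _; apply: pair_lb.
have -> : \sum_(th : {ffun 'I_d -> bool}) (3/2 : R) = 3/2 * \sum_(th : {ffun 'I_d -> bool}) 1.
  by rewrite mulr_sumr; apply: eq_bigr => th _; rewrite mulr1.
rewrite big_split /= -E; lra.
Qed.

Definition V th := \sum_u Pu th u * ell hdm dl th (X u).

Lemma V_lb th : dl / d%:R * \sum_r Ar r th <= V th.
Proof.
rewrite /V /Ar.
rewrite exchange_big mulr_sumr /=.
apply: ler_sum => u _.
rewrite -!mulr_sumr mulrCA ler_wpM2l //; first exact: ltW (Pu_gt0 th u).
exact: (ell_lb hdm hd dl th (hX u)).
Qed.

Lemma V_avg : 3 * dl / 4 * \sum_(th : {ffun 'I_d -> bool}) 1 <= \sum_th V th.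
Proof.
have hd' := dpos hd.
apply: (@le_trans _ _ (\sum_th (dl / d%:R * \sum_r Ar r th))); last first.
  by apply: ler_sum => th _; apply: V_lb.
rewrite -mulr_sumr exchange_big /=.
apply: (@le_trans _ _ (dl / d%:R * \sum_(r < d) (3/4 * \sum_(th : {ffun 'I_d -> bool}) 1))).
  rewrite [\sum_(r < d) _]sumr_const card_ord -mulr_natr.
  rewrite le_eqVlt; apply/orP; left; apply/eqP; field; exact: lt0r_neq0.
apply: ler_wpM2l; first by rewrite divr_ge0 // ltW.
by apply: ler_sum => r _; apply: Ar_sum.
Qed.

End Assouad.


Lemma cardK n k : #|mem (mkset (fun S : {set 'I_n} => #|S| == k))| = 'C(n, k).
Proof.
have := card_draws ('I_n) k; rewrite card_ord => <-.
rewrite cardsE; apply: eq_card => S /=.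
rewrite /in_mem /=. by apply/idP/idP; rewrite /in_set /= => /asboolP.
Qed.

Lemma cardK2 n k : #|(fun S : {set 'I_n} => #|S| == k)| = 'C(n, k).
Proof.
have := card_draws ('I_n) k; rewrite card_ord => <-.
by rewrite cardsE.
Qed.

Lemma sum_in n (S : {set 'I_n}) : \sum_i ((i \in S)%:R : R) = #|S|%:R.
Proof. rewrite -sumr_const [RHS]big_mkcond /=. apply: eq_bigr => i _. by case: (i \in S). Qed.

Section Yao.
Variables (m d : nat) (hdm : (d + d <= m)%N) (hd : (0 < d)%N).
Variable (dl : R) (hdl0 : 0 < dl) (hdl1 : dl <= 1/4).
Variables (k n : nat) (hkn : (k <= n)%N) (hk1 : (1 <= k)%N) (eps : R).
Variable xt : seq (cost m) -> alloc m.
Hypothesis hvalid : panel_function_valid k d%:R xt.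
Hypothesis hguar : panel_guarantee k d%:R eps xt.

Local Notation fc := (fc hdm).
Definition Xu (u : {ffun 'I_k -> Ty d}) := xt (map fc (useq u)).

Lemma xt_valid (s : seq (Ty d)) : size s = k -> X_B d%:R (xt (map fc s)).
Proof.
move=> hs; apply: hvalid; first by rewrite size_map.
move=> f /List.in_map_iff [t [<- _]]; exact: (fc_ok hdm t).2.
Qed.

Lemma Xu_valid u : X_B d%:R (Xu u).
Proof. by apply: xt_valid; rewrite size_useq. Qed.

Local Notation W := (fun (w : {ffun 'I_n -> Ty d}) th => \prod_a Dt dl th (w a)).

Lemma one_instance th (w : {ffun 'I_n -> Ty d}) :
  (\sum_(S : {set 'I_n} | #|S| == k)
     (\sum_i gl hdm th (w i) (xt (map fc (map w (enum S))))) / n%:R) / ('C(n, k))%:R <= eps.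
Proof.
pose Cost := fun i => fc (w i).
have H : expected_panel_cost k Cost xt <= social_opt d%:R Cost + eps.
  by apply: hguar => // i; apply: fc_ok.
have Hopt : social_opt d%:R Cost <= social_cost Cost (xstar hdm th).
  rewrite /social_opt; apply: ge_inf.
    exists 0 => y [x [hc _] <-]; rewrite /social_cost divr_ge0 //.
    apply: sumr_ge0 => i _; rewrite /Cost /fc.
    by case/andP: (hc (jmap hdm (w i))) => _ h; rewrite subr_ge0.
  by exists (xstar hdm th) => //; apply: xstar_XB.
have hC : ('C(n, k))%:R != 0 :> R by rewrite pnatr_eq0 -lt0n bin_gt0.
have E : forall S : {set 'I_n},
   (\sum_i gl hdm th (w i) (xt (map fc (map w (enum S))))) / n%:R =
   social_cost Cost (panel_outcome Cost xt S) - social_cost Cost (xstar hdm th).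
  move=> S; rewrite /social_cost /panel_outcome -map_comp -mulrBl -sumrB.
  congr (_ * _); apply: eq_bigr => i _; rewrite /gl /Cost /fc; ring.
under eq_bigr do rewrite E.
rewrite sumrB sumr_const cardK2 -[_ *+ 'C(n, k)]mulr_natr.
move: H; rewrite /expected_panel_cost cardK.
set A := \sum_(S | _) _.
move=> H.
have -> : (A - social_cost Cost (xstar hdm th) * ('C(n, k))%:R) / ('C(n, k))%:R =
   A / ('C(n, k))%:R - social_cost Cost (xstar hdm th) by field.
lra.
Qed.

Lemma yao th : ((n - k)%:R * V hdm dl Xu th - k%:R) / n%:R <= eps.
Proof.
have hn : (0 < n)%N by lia.
have hn' : (n%:R : R) != 0 by rewrite pnatr_eq0 -lt0n.
have hC : ('C(n, k))%:R != 0 :> R by rewrite pnatr_eq0 -lt0n bin_gt0.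
have hD := Dt_sum hd hdl0 hdl1 th.
have sW : \sum_(w : {ffun 'I_n -> Ty d}) W w th = 1 by apply: sumW.
have hW : forall w, 0 <= W w th.
  by move=> w; apply: prodr_ge0 => a _; apply/ltW/(Dt_gt0 hd hdl0 hdl1).
set c : R := (n%:R * ('C(n, k))%:R)^-1.
set g := fun (S : {set 'I_n}) (i : 'I_n) (w : {ffun 'I_n -> Ty d}) =>
   gl hdm th (w i) (xt (map fc (map w (enum S)))).
have H1 : \sum_w W w th * ((\sum_(S : {set 'I_n} | #|S| == k) (\sum_i g S i w) / n%:R) / ('C(n, k))%:R) <= eps.
  apply: (@le_trans _ _ (\sum_w W w th * eps)); last by rewrite -mulr_suml sW mul1r.
  apply: ler_sum => w _; rewrite ler_wpM2l //; exact: one_instance.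
have E1 : \sum_w W w th * ((\sum_(S : {set 'I_n} | #|S| == k) (\sum_i g S i w) / n%:R) / ('C(n, k))%:R) =
   \sum_(S : {set 'I_n} | #|S| == k) (\sum_i \sum_w W w th * g S i w) * c.
  transitivity (\sum_w \sum_(S : {set 'I_n} | #|S| == k) \sum_i W w th * g S i w * c).
    apply: eq_bigr => w _.
    have -> : (\sum_(S : {set 'I_n} | #|S| == k) (\sum_i g S i w) / n%:R) / ('C(n, k))%:R =
       \sum_(S : {set 'I_n} | #|S| == k) \sum_i g S i w * c.
      rewrite mulr_suml; apply: eq_bigr => S _; rewrite -mulr_suml /c; field.
      by apply/andP; split.
    rewrite mulr_sumr; apply: eq_bigr => S _; rewrite mulr_sumr; apply: eq_bigr => i _.
    by rewrite mulrA.
  rewrite exchange_big /=; apply: eq_bigr => S _.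
  rewrite exchange_big /= mulr_suml; apply: eq_bigr => i _.
  by rewrite mulr_suml.
rewrite E1 in H1; apply: le_trans H1.
have c0 : 0 <= c by rewrite /c invr_ge0 mulr_ge0 // ler0n.
have HS : forall S : {set 'I_n}, #|S| == k ->
   (n - k)%:R * V hdm dl Xu th - k%:R <= \sum_i \sum_w W w th * g S i w.
  move=> S /eqP hS.
  have ue : uniq (enum S) by apply: enum_uniq.
  have se : size (enum S) = k by rewrite -cardE.
  apply: (@le_trans _ _ (\sum_i (V hdm dl Xu th - (i \in S)%:R * (V hdm dl Xu th + 1)))); last first.
    apply: ler_sum => i _; case: (boolP (i \in S)) => iS.
      rewrite mul1r opprD addrA subrr add0r.
      apply: (@le_trans _ _ (\sum_w W w th * (-1))).
        by rewrite -mulr_suml sW mul1r.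
      apply: ler_sum => w _; rewrite ler_wpM2l // /g /gl.
      have [hc1 _] := xstar_XB hdm th.
      have [hc2 _] : X_B d%:R (xt (map fc (map w (enum S)))).
        by apply: xt_valid; rewrite size_map.
      case/andP: (hc1 (jmap hdm (w i))) => h1 _.
      case/andP: (hc2 (jmap hdm (w i))) => _ h2.
      lra.
    rewrite mul0r subr0.
    have iS' : i \notin enum S by rewrite mem_enum.
    have := marg hD ue se iS' (fun s t => gl hdm th t (xt (map fc s))).
    rewrite /g /= => ->.
    by [].
  rewrite sumrB sumr_const card_ord -mulr_suml sum_in hS -mulr_natr.
  rewrite natrB //. lra.
apply: (@le_trans _ _ (\sum_(S : {set 'I_n} | #|S| == k) (((n - k)%:R * V hdm dl Xu th - k%:R) * c))).
  rewrite sumr_const cardK2 -mulr_natr /c.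
  rewrite le_eqVlt; apply/orP; left; apply/eqP; field.
  by apply/andP; split.
apply: ler_sum => S hS; rewrite ler_wpM2r //; exact: HS.
Qed.

End Yao.


Theorem theorem3p3 :
  exists c : R, 0 < c /\
  forall (m : nat) (eps : R) (k : nat),
    (2 <= m)%N -> 0 < eps -> eps < 1 / 64 -> (1 <= k)%N ->
    forall xt : seq (cost m) -> alloc m,
      panel_function_valid k (m./2)%:R xt ->
      panel_guarantee k (m./2)%:R eps xt ->
      c * m%:R / eps ^+ 2 <= k%:R.
Proof.
exists (1/4000); split; first lra.
move=> m eps k hm he0 he1 hk1 xt hvalid hguar.
rewrite leNgt; apply/negP => hlt.
set d := m./2 in hvalid hguar.
have hdm : (d + d <= m)%N by rewrite /d; lia.
have hd : (1 <= d)%N by rewrite /d; lia.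
have hmd : (m <= 3 * d)%N by rewrite /d; lia.
have hmdR : (m%:R : R) <= 3 * d%:R by rewrite -natrM ler_nat.
set dl := 2 * eps.
have hdl0 : 0 < dl by rewrite /dl; lra.
have hdl1 : dl <= 1/4 by rewrite /dl; lra.
have he2 : 0 < eps ^+ 2 by rewrite exprn_gt0.
have hke : k%:R * eps ^+ 2 < m%:R / 4000.
  by move: hlt; rewrite ltr_pdivlMr // => h; lra.
have hk : k%:R * dl ^+ 2 * 256 <= d%:R.
  rewrite /dl; have -> : k%:R * (2 * eps) ^+ 2 * 256 = 1024 * (k%:R * eps ^+ 2) by ring.
  have := ler0n R d; lra.
pose N := (Num.Def.archi_bound (4 / eps)).+1.
have hN : 4 / eps < N%:R.
  apply: lt_trans (archi_boundP _) _; first by rewrite divr_ge0 // ltW.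
  by rewrite ltr_nat.
set n := (k * N)%N.
have hkn : (k <= n)%N by rewrite /n /N leq_pmulr.
have hnR : (n%:R : R) = k%:R * N%:R by rewrite /n natrM.
have hNe : 4 <= N%:R * eps.
  by move: hN; rewrite ltr_pdivrMr // => h; lra.
have hk1R : (1 : R) <= k%:R by rewrite ler1n.
have hne : 4 * k%:R <= n%:R * eps.
  rewrite hnR -mulrA; have := ler_wpM2l (ler0n _ k) hNe; lra.
have Hy := yao hdm hd hdl0 hdl1 hkn hk1 hvalid hguar.
have Havg := V_avg hdm hd hdl0 hdl1 (Xu_valid hdm hvalid) hk.
set VV := V hdm dl (Xu hdm xt) in Hy Havg.
have hn0 : (0 : R) < n%:R by rewrite ltr0n /n muln_gt0 hk1.
have Hy' : forall th, (n - k)%:R * VV th <= n%:R * eps + k%:R.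
  move=> th; have := Hy th; rewrite ler_pdivrMr // => h; lra.
have Hs : (n - k)%:R * \sum_th VV th <= (n%:R * eps + k%:R) * \sum_(th : {ffun 'I_d -> bool}) 1.
  rewrite mulr_sumr mulr_sumr; apply: ler_sum => th _; rewrite mulr1; exact: Hy'.
have N1 : (1 : R) <= \sum_(th : {ffun 'I_d -> bool}) 1.
  rewrite (bigD1 [ffun _ => true]) //= lerDl sumr_ge0 //.
have hnk : (0 : R) <= (n - k)%:R by rewrite ler0n.
have := ler_wpM2l hnk Havg.
move: Hs N1; set S1 := \sum_(th : {ffun 'I_d -> bool}) (1 : R).
set SV := \sum_th VV th.
rewrite natrB // => Hs N1 Hc.
have : (n%:R - k%:R) * (3 * dl / 4) * S1 <= (n%:R * eps + k%:R) * S1.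
  rewrite -mulrA; lra.
rewrite ler_pM2r; last lra.
rewrite /dl => h.
have : k%:R * eps <= k%:R / 64.
  rewrite ler_wpM2l ?ler0n //; lra.
lra.
Qed.
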